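(* Let $\beta\in(0,1]$ and consider $N_r\to\infty$ with $N_t=\beta N_r$ (integer), with $\mathbf H$ an $N_r\times N_t$ matrix with i.i.d. $\mathcal{CN}(0,1)$ entries. Then the high-SNR power offset of the MMSE achievable sum rate, $\mathcal L_\infty^{\rm mmse}=\log_2N_t-\log_2e\big(\sum_{\ell=1}^{N_r-N_t}\frac1\ell-\gamma\big)$, converges to $\log_2\big(\frac{\beta}{1-\beta}\big)$ (interpreted as $+\infty$ when $\beta=1$).
   Context: $\gamma$ is the Euler–Mascheroni constant. The high-SNR power offset is $\mathcal L_\infty^{\rm mmse}=\lim_{\mathrm{snr}\to\infty}(\log_2\mathrm{snr}-I^{\rm mmse}/N_t)$, where $I^{\rm mmse}(\mathrm{snr})=\sum_{i=1}^{N_t}E[\log_2(1+\gamma_i)]$ with $\gamma_i=1/\big[(\mathbf I_{N_t}+\frac{\mathrm{snr}}{N_t}\mathbf H^\dagger\mathbf H)^{-1}\big]_{i,i}-1$. *)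

(* Defs.v *)
From Stdlib Require Import Reals.
From Coquelicot Require Import Coquelicot.
Open Scope R_scope.

Definition log2 (x : R) : R := ln x / ln 2.

Fixpoint harmonic (n : nat) : R :=
  match n with
  | O => 0
  | S m => harmonic m + / INR (S m)
  end.

Definition euler_gamma : R :=
  real (Lim_seq (fun n => harmonic n - ln (INR n))).

Definition L_mmse_inf (Nr Nt : nat) : R :=
  log2 (INR Nt) - log2 (exp 1) * (harmonic (Nr - Nt) - euler_gamma).

(* Main.v *)
Require Import Defs.
From Stdlib Require Import Reals Lra.
From Coquelicot Require Import Coquelicot.
Open Scope R_scope.

Lemma lnle (y : R) : 0 < y -> ln y <= y - 1.
Proof.
  intros Hy. rewrite <- (ln_exp (y - 1)). apply ln_le; auto.
  generalize (exp_ineq1_le (y - 1)); lra.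
Qed.

Lemma ln_up (x : R) : 0 < x -> ln (x + 1) - ln x <= / x.
Proof.
  intros Hx. rewrite <- ln_div by lra.
  replace (/ x) with ((x + 1) / x - 1) by (field; lra).
  apply lnle. apply Rdiv_lt_0_compat; lra.
Qed.

Lemma ln_lo (x : R) : 0 < x -> / (x + 1) <= ln (x + 1) - ln x.
Proof.
  intros Hx. assert (H := lnle (x / (x + 1)) ltac:(apply Rdiv_lt_0_compat; lra)).
  rewrite ln_div in H by lra.
  replace (x / (x + 1) - 1) with (- / (x + 1)) in H by (field; lra). lra.
Qed.

Lemma harm_ge (n : nat) : ln (INR (S n)) <= harmonic n.
Proof.
  induction n.
  - simpl. rewrite ln_1. lra.
  - change (harmonic (S n)) with (harmonic n + / INR (S n)).
    assert (Hp : 0 < INR (S n)) by apply lt_0_INR, Nat.lt_0_succ.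
    rewrite S_INR. assert (H := ln_up _ Hp). lra.
Qed.

Lemma gamma_lim : is_lim_seq (fun n => harmonic n - ln (INR n)) euler_gamma.
Proof.
  set (b := fun n => harmonic (S n) - ln (INR (S n))).
  assert (Hb : ex_finite_lim_seq b).
  { apply ex_finite_lim_seq_decr with 0.
    - intro n. unfold b.
      change (harmonic (S (S n))) with (harmonic (S n) + / INR (S (S n))).
      assert (Hp : 0 < INR (S n)) by apply lt_0_INR, Nat.lt_0_succ.
      rewrite (S_INR (S n)). assert (H := ln_lo _ Hp). lra.
    - intro n. unfold b.
      assert (Hp : 0 < INR (S n)) by apply lt_0_INR, Nat.lt_0_succ.
      assert (H1 := harm_ge (S n)). rewrite (S_INR (S n)) in H1.
      assert (H := ln_lo _ Hp). assert (0 < / (INR (S n) + 1)).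
      { apply Rinv_0_lt_compat; lra. } lra. }
  destruct Hb as [l Hl].
  assert (Ha : is_lim_seq (fun n => harmonic n - ln (INR n)) l).
  { apply is_lim_seq_incr_1. exact Hl. }
  unfold euler_gamma. rewrite (is_lim_seq_unique _ _ Ha). simpl. exact Ha.
Qed.

Theorem corollary4 (beta : R) (hbeta : 0 < beta <= 1)
  (Nr Nt : nat -> nat)
  (hNt : forall k, INR (Nt k) = beta * INR (Nr k))
  (hNr : is_lim_seq (fun k => INR (Nr k)) p_infty) :
  is_lim_seq (fun k => L_mmse_inf (Nr k) (Nt k))
    (if Req_EM_T beta 1 then p_infty else Finite (log2 (beta / (1 - beta)))).
Proof.
  assert (Hl2 : 0 < ln 2) by (rewrite <- ln_1; apply ln_increasing; lra).
  assert (He : log2 (exp 1) = / ln 2) by (unfold log2; rewrite ln_exp; field; lra).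
  assert (Hle : forall k, (Nt k <= Nr k)%nat).
  { intro k. apply INR_le. rewrite hNt. generalize (pos_INR (Nr k)). nra. }
  assert (HM : forall k, INR (Nr k - Nt k) = (1 - beta) * INR (Nr k)).
  { intro k. rewrite minus_INR by apply Hle. rewrite hNt. ring. }
  assert (Hln : is_lim_seq (fun k => ln (INR (Nr k))) p_infty).
  { unfold is_lim_seq. eapply filterlim_comp. exact hNr. exact is_lim_ln_p. }
  assert (Hev : eventually (fun k => 0 < INR (Nr k))).
  { apply (hNr (fun x => 0 < x)). exists 0. intros; lra. }
  destruct (Req_EM_T beta 1) as [Hb1 | Hb1].
  - apply is_lim_seq_ext_loc with
      (fun k => ln (INR (Nr k)) * / ln 2 + euler_gamma / ln 2).
    + exists 0%nat. intros k _. unfold L_mmse_inf. rewrite He.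
      assert (Ne : Nt k = Nr k).
      { apply INR_eq. rewrite hNt, Hb1. ring. }
      rewrite Ne, Nat.sub_diag. unfold log2. simpl. field. lra.
    + eapply is_lim_seq_plus.
      * eapply is_lim_seq_mult. exact Hln. apply is_lim_seq_const.
        apply is_Rbar_mult_p_infty_pos. simpl. apply Rinv_0_lt_compat; lra.
      * apply is_lim_seq_const.
      * reflexivity.
  - assert (Hb : beta < 1) by (destruct hbeta; destruct H0; [exact H0| congruence]).
    set (a := fun n => harmonic n - ln (INR n)).
    assert (HaM : is_lim_seq (fun k => a (Nr k - Nt k)%nat) euler_gamma).
    { apply is_lim_seq_subseq. 2: exact gamma_lim.
      intros P [N HN]. 
      destruct (hNr (fun x => INR N / (1 - beta) < x)) as [K HK].
      { exists (INR N / (1 - beta)). intros; lra. }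
      exists K. intros k Hk. apply HN. apply INR_le. rewrite HM.
      specialize (HK k Hk). simpl in HK.
      apply Rmult_lt_compat_l with (r := 1 - beta) in HK; [|lra].
      replace ((1 - beta) * (INR N / (1 - beta))) with (INR N) in HK by (field; lra).
      lra. }
    apply is_lim_seq_ext_loc with
      (fun k => (ln beta - ln (1 - beta)) / ln 2 - (a (Nr k - Nt k)%nat - euler_gamma) / ln 2).
    + destruct Hev as [K HK]. exists K. intros k Hk. specialize (HK k Hk).
      unfold L_mmse_inf, a. rewrite He. unfold log2. rewrite HM, hNt.
      rewrite !ln_mult by lra. field. lra.
    + replace (log2 (beta / (1 - beta))) with
        ((ln beta - ln (1 - beta)) / ln 2 - (euler_gamma - euler_gamma) / ln 2).
      2:{ unfold log2. rewrite ln_div by lra. field. lra. }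
      apply is_lim_seq_minus'. apply is_lim_seq_const.
      unfold Rdiv. apply is_lim_seq_scal_r with (a := / ln 2) (lu := Finite (euler_gamma - euler_gamma)).
      apply is_lim_seq_minus'. exact HaM. apply is_lim_seq_const.
Qed.
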